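(* Let $F=\{f_i\}_{i=1}^N$ be a uniform Parseval frame for an $n$-dimensional Hilbert space $\mathcal{H}_n$, and let $p>1$. Then $\mathrm{AE}_{\mathcal{N}}^{(1),p}(F)=\frac nN$, and the canonical dual $S_F^{-1}F$ is the unique $1$-erasure numerically optimal dual of $F$, i.e. $\zeta_{\mathcal{N}}^{(1),p}(F)=\{S_F^{-1}F\}$.
   Context: A uniform Parseval frame is a frame $\{f_i\}$ with $\sum_i|\langle f,f_i\rangle|^2=\|f\|^2$ for all $f$ and all $\|f_i\|$ equal; then $S_F=I$ and $S_F^{-1}F=F$. $G=\{g_i\}_{i=1}^N$ is a dual of $F$ if $f=\sum_i\langle f,f_i\rangle g_i$ for all $f$. The numerical radius of an operator $T$ is $\omega(T)=\sup\{|\langle Tf,f\rangle|:\|f\|=1\}$. With $T_F f=(\langle f,f_i\rangle)_i$ the analysis operator and $\mathcal{D}^{(1)}$ the $N\times N$ diagonal matrices with exactly one diagonal entry $1$ and the rest $0$, define $\mathrm{AE}_{\mathcal{N}}^{(1),p}(F,G)=\{\frac1N\sum_{D\in\mathcal{D}^{(1)}}\omega(T_G^*DT_F)^p\}^{1/p}$; here $T_G^*DT_F$ is the operator $f\mapsto\langle f,f_i\rangle g_i$, whose numerical radius is $\frac{|\langle f_i,g_i\rangle|+\|f_i\|\|g_i\|}{2}$. $\mathrm{AE}_{\mathcal{N}}^{(1),p}(F)$ is the infimum of $\mathrm{AE}_{\mathcal{N}}^{(1),p}(F,G)$ over all duals $G$, and $\zeta_{\mathcal{N}}^{(1),p}(F)$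 is the set of duals attaining it. *)

(* Defs.v *)
(* Hilbert space H_n := 'cV[R[i]]_n
   (complex column vectors) with the standard inner product, R : realType. *)
From HB Require Import structures.
From mathcomp Require Import all_boot all_order all_algebra.
From mathcomp Require Import complex.
From mathcomp Require Import all_classical all_reals exp.
Set Implicit Arguments. Unset Strict Implicit. Unset Printing Implicit Defensive.
Import Order.TTheory GRing.Theory Num.Theory.
Local Open Scope ring_scope.
Local Open Scope classical_set_scope.

Section FrameDefs.
Variable R : realType.
Local Notation C := R[i].

Definition inner (n : nat) (x y : 'cV[C]_n) : C :=
  \sum_(k < n) x k 0 * conjc (y k 0).

Definition vnorm (n : nat) (x : 'cV[C]_n) : R :=
  Num.sqrt (\sum_(k < n) Normc.normc (x k 0) ^+ 2).

Definition adjmx (m n : nat) (A : 'M[C]_(m, n)) : 'M[C]_(n, m) :=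
  \matrix_(i, j) conjc (A j i).

Variables n N : nat.

Definition parseval_frame (F : 'I_N -> 'cV[C]_n) : Prop :=
  forall f : 'cV[C]_n, \sum_(i < N) Normc.normc (inner f (F i)) ^+ 2 = vnorm f ^+ 2.

Definition uniform_norm (F : 'I_N -> 'cV[C]_n) : Prop :=
  forall i j, vnorm (F i) = vnorm (F j).

Definition uniform_parseval_frame (F : 'I_N -> 'cV[C]_n) : Prop :=
  parseval_frame F /\ uniform_norm F.

Definition is_dual (F G : 'I_N -> 'cV[C]_n) : Prop :=
  forall f : 'cV[C]_n, f = \sum_(i < N) inner f (F i) *: G i.

(* analysis operator T_F f = (<f, f_i>)_i, as an N x n matrix *)
Definition analysis_op (F : 'I_N -> 'cV[C]_n) : 'M[C]_(N, n) :=
  \matrix_(i, k) conjc (F i k 0).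

Definition frame_op (F : 'I_N -> 'cV[C]_n) : 'M[C]_n :=
  adjmx (analysis_op F) *m analysis_op F.

Definition canonical_dual (F : 'I_N -> 'cV[C]_n) : 'I_N -> 'cV[C]_n :=
  fun i => invmx (frame_op F) *m F i.

Definition numrad (T : 'M[C]_n) : R :=
  sup [set Normc.normc (inner (T *m f) f) | f in [set f : 'cV[C]_n | vnorm f = 1]].

(* D^(1) = { delta_mx j j : j < N } (one diagonal entry 1, rest 0) *)
Definition AE1p (p : R) (F G : 'I_N -> 'cV[C]_n) : R :=
  powR ((N%:R)^-1 *
        \sum_(j < N) powR (numrad (adjmx (analysis_op G) *m delta_mx j j
                                   *m analysis_op F)) p) p^-1.

Definition AE1p_opt (p : R) (F : 'I_N -> 'cV[C]_n) : R :=
  inf [set AE1p p F G | G in [set G | is_dual F G]].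

Definition zeta1p (p : R) (F : 'I_N -> 'cV[C]_n) : set ('I_N -> 'cV[C]_n) :=
  [set G | is_dual F G /\ AE1p p F G = AE1p_opt p F].

End FrameDefs.

(* Main.v *)
Require Import Defs.
From HB Require Import structures.
From mathcomp Require Import all_boot all_order all_algebra.
From mathcomp Require Import complex.
From mathcomp Require Import all_classical all_reals exp.
From mathcomp Require Import ring lra sequences.
Import Order.TTheory GRing.Theory Num.Theory.
Local Open Scope complex_scope.
Set Implicit Arguments. Unset Strict Implicit. Unset Printing Implicit Defensive.
Local Open Scope ring_scope.
Local Open Scope classical_set_scope.

Section Inner.
Variable R : realType.
Local Notation C := R[i].
Local Notation normc := Normc.normc.
Variable n : nat.
Implicit Types x y z : 'cV[C]_n.

Lemma normCE (z : C) : `|z| = (normc z)%:C. Proof. by []. Qed.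
Lemma normc_ge0 (z : C) : 0 <= normc z.
Proof. by rewrite -ler0c -normCE normr_ge0. Qed.
Lemma normc_sqrC (z : C) : ((normc z) ^+ 2)%:C = z * conjc z.
Proof. by rewrite (rmorphXn (real_complex R)); rewrite -sqr_normc. Qed.

Lemma innerDl x y z : inner (x + y) z = inner x z + inner y z.
Proof. by rewrite /inner -big_split; apply: eq_bigr => k _; rewrite mxE mulrDl. Qed.
Lemma inner0l z : inner 0 z = 0.
Proof. by rewrite /inner big1 // => k _; rewrite mxE mul0r. Qed.
Lemma innerZl a x z : inner (a *: x) z = a * inner x z.
Proof. by rewrite /inner mulr_sumr; apply: eq_bigr => k _; rewrite mxE mulrA. Qed.
Lemma innerNl x z : inner (- x) z = - inner x z.
Proof. by rewrite -scaleN1r innerZl mulN1r. Qed.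
Lemma innerBl x y z : inner (x - y) z = inner x z - inner y z.
Proof. by rewrite innerDl innerNl. Qed.
Lemma inner_suml (I : Type) (r : seq I) (P : pred I) (v : I -> 'cV[C]_n) z :
  inner (\sum_(i <- r | P i) v i) z = \sum_(i <- r | P i) inner (v i) z.
Proof. by apply: (big_morph (fun v => inner v z)); [move=> a b; exact: innerDl | exact: inner0l]. Qed.
Lemma innerC x y : inner y x = conjc (inner x y).
Proof.
rewrite /inner rmorph_sum; apply: eq_bigr => k _.
by rewrite rmorphM /= conjcK mulrC.
Qed.
Lemma innerDr x y z : inner x (y + z) = inner x y + inner x z.
Proof. by rewrite innerC innerDl rmorphD /= -!innerC. Qed.
Lemma innerZr x a y : inner x (a *: y) = conjc a * inner x y.
Proof. by rewrite innerC innerZl rmorphM /= -innerC. Qed.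
Lemma innerBr x y z : inner x (y - z) = inner x y - inner x z.
Proof. by rewrite innerC innerBl rmorphB /= -!innerC. Qed.

Lemma vnorm_ge0 x : 0 <= vnorm x.
Proof. exact: sqrtr_ge0. Qed.
Lemma vnorm2 x : vnorm x ^+ 2 = \sum_(k < n) normc (x k 0) ^+ 2.
Proof. by rewrite /vnorm sqr_sqrtr // sumr_ge0 // => k _; rewrite sqr_ge0. Qed.
Lemma vnorm2C x : (vnorm x ^+ 2)%:C = inner x x.
Proof.
rewrite vnorm2 rmorph_sum; apply: eq_bigr => k _; exact: normc_sqrC.
Qed.
Lemma vnorm0P x : vnorm x = 0 -> x = 0.
Proof.
move=> h; have : \sum_(k < n) normc (x k 0) ^+ 2 = 0 by rewrite -vnorm2 h expr2 mulr0.
move/psumr_eq0P => H; apply/matrixP => k l; rewrite (ord1 l) mxE.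
have := H (fun i _ => sqr_ge0 _) k isT; move/eqP; rewrite sqrf_eq0 => /eqP.
exact: Normc.eq0_normc.
Qed.
Lemma vnormZ a x : vnorm (a *: x) = normc a * vnorm x.
Proof.
rewrite /vnorm.
have -> : \sum_(k < n) normc ((a *: x) k 0) ^+ 2 =
   normc a ^+ 2 * \sum_(k < n) normc (x k 0) ^+ 2.
  by rewrite mulr_sumr; apply: eq_bigr => k _; rewrite mxE Normc.normcM exprMn.
by rewrite sqrtrM ?sqr_ge0 // sqrtr_sqr ger0_norm // normc_ge0.
Qed.
Lemma inner_self_ge0 x : 0 <= inner x x.
Proof. by rewrite -vnorm2C ler0c sqr_ge0. Qed.


Lemma inner0r x : inner x 0 = 0.
Proof. by rewrite innerC inner0l conjc0. Qed.

Lemma le_sq (a b : R) : 0 <= a -> 0 <= b -> a ^+ 2 <= b ^+ 2 -> a <= b.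
Proof. by move=> a0 b0; rewrite (ler_pXn2r (isT : (0 < 2)%N)) // inE. Qed.

Lemma conjcM' (a b : C) : conjc (a * b) = conjc a * conjc b.
Proof. exact: rmorphM. Qed.

Lemma CS x y : normc (inner x y) <= vnorm x * vnorm y.
Proof.
have [Y0|Yn0] := eqVneq (vnorm y) 0.
  by rewrite Y0 (vnorm0P Y0) inner0r Normc.normc0 mulr0.
have Ypos : 0 < vnorm y ^+ 2 by rewrite exprn_gt0 // lt_neqAle eq_sym Yn0 vnorm_ge0.
set w := inner x y.
set s := (vnorm y ^+ 2)^-1.
set v := x - ((s%:C * w) *: y).
have hW : (normc w ^+ 2)%:C = w * conjc w by rewrite normc_sqrC.
have hX := vnorm2C x. have hY := vnorm2C y.
have E : inner v v = (vnorm x ^+ 2 - 2 * s * normc w ^+ 2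
                       + s ^+ 2 * normc w ^+ 2 * vnorm y ^+ 2)%:C.
  rewrite /v innerBl !innerBr !innerZl !innerZr -/w (innerC x y) -/w.
  rewrite conjcM' conjc_real; clear v.
  move: (normc w ^+ 2) hW => W hW; move: (vnorm x ^+ 2) hX => X hX.
  move: (vnorm y ^+ 2) hY s Ypos => Y hY s Ypos.
  rewrite !(rmorphD, rmorphB, rmorphN, rmorphM, rmorphXn, rmorph_nat) /= hW hX hY.
  ring.
have := inner_self_ge0 v; rewrite E ler0c => h.
have hs : s * vnorm y ^+ 2 = 1 by rewrite mulVf // gt_eqF.
apply: le_sq; [exact: normc_ge0 | by rewrite mulr_ge0 // vnorm_ge0 |].
rewrite exprMn.
move: (normc w ^+ 2) (vnorm x ^+ 2) (vnorm y ^+ 2) h hs Ypos => W X Y h hs Yp.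
have h' : 0 <= Y * (X - 2 * s * W + s ^+ 2 * W * Y) by rewrite mulr_ge0 // ltW.
have e : Y * (X - 2 * s * W + s ^+ 2 * W * Y) = X * Y - 2 * (s * Y) * W + (s * Y) ^+ 2 * W by ring.
rewrite e hs in h'; lra.
Qed.

End Inner.

Section Tj.
Variable R : realType.
Local Notation C := R[i].
Variables n N : nat.

Lemma Tj_mul (F G : 'I_N -> 'cV[C]_n) j (f : 'cV[C]_n) :
  (adjmx (analysis_op G) *m delta_mx j j *m analysis_op F) *m f = inner f (F j) *: G j.
Proof.
rewrite -(mul_delta_mx (0 : 'I_1)) mulmxA -colE -(mulmxA _ _ (analysis_op F)) -rowE -mulmxA.
apply/matrixP => k l; rewrite (ord1 l) !mxE big_ord1 !mxE conjcK mulrC.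
congr (_ * _); rewrite /inner; apply: eq_bigr => m _; by rewrite !mxE mulrC.
Qed.

End Tj.

Section NR.
Variable R : realType.
Local Notation C := R[i].
Local Notation normc := Normc.normc.
Variable n : nat.
Implicit Types a b f : 'cV[C]_n.

Definition unitS := [set f : 'cV[C]_n | vnorm f = 1].
Definition qv a b f := normc (inner f a * inner b f).
Definition nr a b := sup [set qv a b f | f in unitS].

Lemma normc_real (x : R) : normc x%:C = `|x|.
Proof. by rewrite /Normc.normc /= expr0n /= addr0 sqrtr_sqr. Qed.

Lemma normc_innerself a : normc (inner a a) = vnorm a ^+ 2.
Proof. by rewrite -vnorm2C normc_real ger0_norm // sqr_ge0. Qed.

Lemma vnorm_gt0 f : f != 0 -> 0 < vnorm f.
Proof.
move=> f0; rewrite lt_neqAle vnorm_ge0 andbT eq_sym; apply/eqP => /vnorm0P.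
by move/eqP: f0.
Qed.

Lemma qv_bound a b f : vnorm f = 1 -> qv a b f <= vnorm a * vnorm b.
Proof.
move=> f1; rewrite /qv Normc.normcM.
have h1 := CS f a; have h2 := CS b f; rewrite f1 mul1r in h1; rewrite f1 mulr1 in h2.
by apply: ler_pM => //; apply: normc_ge0.
Qed.

Lemma nr_ub a b f : vnorm f = 1 -> qv a b f <= nr a b.
Proof.
move=> f1; apply: ub_le_sup; last by exists f.
by exists (vnorm a * vnorm b) => y [g g1 <-]; apply: qv_bound.
Qed.

Lemma nr_le a b M : 0 <= M -> (forall f, vnorm f = 1 -> qv a b f <= M) -> nr a b <= M.
Proof.
move=> M0 H; rewrite /nr.
have [[f f1]|nf] := pselect (exists f : 'cV[C]_n, vnorm f = 1).
  by apply: ge_sup; [exists (qv a b f), f | move=> y [g g1 <-]; apply: H].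
rewrite (_ : [set _ | _ in _] = set0) ?sup0 //.
by apply/seteqP; split => // y [g g1 _]; exfalso; apply: nf; exists g.
Qed.

Lemma nr_scale a b f : f != 0 -> qv a b f <= nr a b * vnorm f ^+ 2.
Proof.
move=> f0; have r0 := vnorm_gt0 f0; set r := vnorm f.
set u := (r^-1)%:C *: f.
have u1 : vnorm u = 1 by rewrite /u vnormZ normc_real ger0_norm ?invr_ge0 ?ltW // mulVf // gt_eqF.
have h := nr_ub a b u1.
rewrite /qv /u innerZl innerZr conjc_real in h.
have e1 : r^-1%:C * inner f a * (r^-1%:C * inner b f) = (r^-1 * r^-1)%:C * (inner f a * inner b f).
  by rewrite rmorphM /=; ring.
have rr : 0 <= r^-1 * r^-1 by rewrite mulr_ge0 // invr_ge0 ltW.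
rewrite e1 Normc.normcM normc_real (ger0_norm rr) in h.
have e : qv a b f = r^-1 * r^-1 * qv a b f * r ^+ 2 by field; rewrite gt_eqF.
rewrite {1}e; apply: ler_wpM2r => //; exact: exprn_ge0 (ltW r0).
Qed.

Lemma nr_ge_inner a b : a != 0 -> normc (inner b a) <= nr a b.
Proof.
move=> a0; have r0 := vnorm_gt0 a0.
have := nr_scale a b a0; rewrite /qv Normc.normcM normc_innerself.
by rewrite mulrC ler_pM2r // exprn_gt0.
Qed.

Lemma nr_self a : a != 0 -> nr a a = vnorm a ^+ 2.
Proof.
move=> a0; apply/eqP; rewrite eq_le; apply/andP; split.
  by apply: nr_le; [exact: sqr_ge0 | move=> f f1; rewrite expr2; exact: qv_bound].
by rewrite -normc_innerself; apply: nr_ge_inner.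
Qed.

Lemma nr_unique a b : a != 0 -> inner b a = (vnorm a ^+ 2)%:C ->
  nr a b <= vnorm a ^+ 2 -> b = a.
Proof.
move=> a0 hba hnr; have r0 := vnorm_gt0 a0.
have A0 : 0 < vnorm a ^+ 2 by rewrite exprn_gt0.
set d := b - a.
have hb : b = a + d by rewrite /d addrC subrK.
clearbody d.
have iaa := vnorm2C a; have idd := vnorm2C d.
move: (vnorm a ^+ 2) iaa hba hnr A0 => A iaa hba hnr A0.
set D := vnorm d ^+ 2.
have Dge : 0 <= D := sqr_ge0 _.
have hD : vnorm d ^+ 2 = D by [].
clearbody D. rewrite hD in idd.
have ida : inner d a = 0.
  by move: hba; rewrite hb innerDl -iaa => h; rewrite -(addKr A%:C (inner d a)) h addNr.
have iad : inner a d = 0 by rewrite innerC ida conjc0.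
pose f := a + (2^-1 : R)%:C *: d.
have hf : f = a + (2^-1 : R)%:C *: d by [].
clearbody f.
have iff : inner f f = (A + 4^-1 * D)%:C.
  rewrite hf !(innerDl, innerDr, innerZl, innerZr) conjc_real ida iad -iaa -idd.
  rewrite !(rmorphD, rmorphM) /= (rmorphV _ (x := 2)) ?unitfE ?pnatr_eq0 //.
  rewrite (rmorphV _ (x := 4)) ?unitfE ?pnatr_eq0 // !rmorph_nat.
  by field.
have f0 : f != 0.
  apply/negP => /eqP f0; move: iff; rewrite f0 inner0l => h.
  have h' : (A + 4^-1 * D)%:C = (0 : R)%:C by rewrite -h.
  have := complexI h'; lra.
have hq : qv a b f = A * (A + 2^-1 * D).
  rewrite /qv hf hb !(innerDl, innerDr, innerZl, innerZr) conjc_real ida iad -iaa -idd.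
  rewrite !mulr0 !addr0 add0r.
  have -> : A%:C * (A%:C + (2^-1)%:C * D%:C) = (A * (A + 2^-1 * D))%:C.
    by rewrite !(rmorphD, rmorphM).
  rewrite normc_real ger0_norm //; apply: mulr_ge0 (ltW A0) _; apply: addr_ge0 (ltW A0) (mulr_ge0 _ Dge); by rewrite invr_ge0.
have hvf : vnorm f ^+ 2 = A + 4^-1 * D.
  by apply: complexI; rewrite vnorm2C iff.
have := nr_scale a b f0; rewrite hq hvf => h.
have h2 : A * (A + 2^-1 * D) <= A * (A + 4^-1 * D).
  apply: (le_trans h); apply: ler_wpM2r => //; apply: addr_ge0 (ltW A0) (mulr_ge0 _ Dge); by rewrite invr_ge0.
have D0 : D = 0 by nra.
move: hD; rewrite D0 => /eqP; rewrite sqrf_eq0 => /eqP /vnorm0P d0.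
by rewrite hb d0 addr0.
Qed.
End NR.

Section Frame.
Variable R : realType.
Local Notation C := R[i].
Local Notation normc := Normc.normc.
Variables n N : nat.
Implicit Types F G : 'I_N -> 'cV[C]_n.

Lemma inner_delta k (v : 'cV[C]_n) : inner (delta_mx k 0) v = conjc (v k 0).
Proof.
rewrite /inner (bigD1 k) //= big1 ?addr0; first by rewrite mxE !eqxx mul1r.
by move=> l lk; rewrite mxE (negbTE lk) mul0r.
Qed.

Lemma dual_entry F G : is_dual F G -> forall k l : 'I_n,
  \sum_(i < N) conjc (F i l 0) * G i k 0 = (k == l)%:R.
Proof.
move=> hd k l; have := hd (delta_mx l 0).
move/(congr1 (fun M : 'cV[C]_n => M k 0)); rewrite summxE mxE eqxx andbT => ->.
by apply: eq_bigr => i _; rewrite mxE inner_delta.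
Qed.

Lemma dual_trace F G : is_dual F G -> \sum_(i < N) inner (G i) (F i) = n%:R.
Proof.
move=> hd; rewrite /inner exchange_big /=.
rewrite (eq_bigr (fun _ => 1)); first by rewrite sumr_const card_ord.
move=> k _; have := dual_entry hd k k; rewrite eqxx mulr1n => <-; apply: eq_bigr => i _; exact: mulrC.
Qed.

Lemma conj_i : conjc ('i%C : C) = - 'i%C.
Proof. by apply/eqP; rewrite eq_complex /= oppr0 !eqxx. Qed.

Lemma parseval_dual F : parseval_frame F -> is_dual F F.
Proof.
move=> hp.
pose D (f : 'cV[C]_n) := \sum_(i < N) inner f (F i) *: F i - f.
have DD x y : D (x + y) = D x + D y.
  rewrite /D (eq_bigr (fun i => inner x (F i) *: F i + inner y (F i) *: F i)).
    by rewrite big_split /= opprD addrACA.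
  by move=> i _; rewrite innerDl scalerDl.
have DZ (c : C) x : D (c *: x) = c *: D x.
  rewrite /D scalerBr scaler_sumr; congr (_ - _); apply: eq_bigr => i _.
  by rewrite innerZl scalerA.
have DQ x : inner (D x) x = 0.
  rewrite /D innerBl inner_suml.
  rewrite (eq_bigr (fun i => ((normc (inner x (F i))) ^+ 2)%:C)); last first.
    by move=> i _; rewrite innerZl normc_sqrC -innerC.
  by rewrite -rmorph_sum /= hp vnorm2C subrr.
have P1 x y : inner (D x) y + inner (D y) x = 0.
  have := DQ (x + y); rewrite DD innerDl !innerDr DQ DQ add0r addr0.
  by rewrite addrC.
have P2 x y : inner (D x) y = inner (D y) x.
  have := P1 x ('i%C *: y); rewrite DZ innerZr innerZl conj_i => h.
  have hi : ('i%C : C) != 0 by rewrite eq_complex /= oner_eq0 andbF.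
  apply/eqP; rewrite -subr_eq0; apply/eqP.
  apply: (mulfI hi); rewrite mulr0; move: h.
  move: (inner (D x) y) (inner (D y) x) ('i%C : C) => u v w h.
  by rewrite -[RHS]oppr0 -h; ring.
have D0 x : D x = 0.
  have h := P1 x (D x); rewrite -(P2 x (D x)) in h.
  have h2 : (2%:R : C) != 0 by rewrite pnatr_eq0.
  have : inner (D x) (D x) = 0.
    by apply: (mulfI h2); rewrite mulr0 mulr2n mulrDl mul1r h.
  by rewrite -vnorm2C => /eqP; rewrite -[0 : C]/((0 : R)%:C) => /eqP /complexI /eqP; rewrite sqrf_eq0 => /eqP /vnorm0P.
move=> f; apply/esym/eqP; rewrite -subr_eq0; apply/eqP; exact: D0 f.
Qed.

Lemma canonical_dual_self F : is_dual F F -> canonical_dual F = F.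
Proof.
move=> hd; apply/funext => j; rewrite /canonical_dual.
have -> : frame_op F = 1%:M.
  apply/matrixP => k l; rewrite /frame_op !mxE -(dual_entry hd k l).
  by apply: eq_bigr => i _; rewrite !mxE conjcK mulrC.
by rewrite invmx1 mul1mx.
Qed.

Lemma uniform_norm2 F : (0 < N)%N -> uniform_parseval_frame F ->
  forall j, vnorm (F j) ^+ 2 = n%:R / N%:R.
Proof.
move=> N0 [hp hu] j; have hd := parseval_dual hp.
have := dual_trace hd.
rewrite (eq_bigr (fun _ => (vnorm (F j) ^+ 2)%:C)); last first.
  by move=> i _; rewrite -vnorm2C (hu i j).
rewrite sumr_const card_ord -rmorphMn -(rmorph_nat (real_complex R) n) => /complexI.
move=> h; rewrite -h; field; by rewrite pnatr_eq0 -lt0n.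
Qed.

End Frame.

Section Pow.
Variable R : realType.

Lemma bern_strict (x p : R) : 0 <= x -> 1 < p -> x != 1 -> 1 + p * (x - 1) < powR x p.
Proof.
move=> x0 p1 x1.
have [->|xpos] := eqVneq x 0.
  by rewrite powR0 ?gt_eqF ?(lt_trans ltr01) //; lra.
have xp : 0 < x by rewrite lt_neqAle eq_sym xpos x0.
have p0 : 0 < p := lt_trans ltr01 p1.
rewrite -mulr_powRB1 // /powR (negbTE xpos).
set r := p - 1.
have r0 : 0 < r by rewrite /r; lra.
have lnx : ln x != 0 by rewrite ln_eq0.
have h1 : 1 + r * ln x < expR (r * ln x).
  by apply: expR_gt1Dx; apply: mulf_neq0 => //; rewrite gt_eqF.
have h2 : 1 - ln x <= x^-1.
  by have := expR_ge1Dx (- ln x); rewrite expRN lnK // posrE.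
have h3 : x - x * ln x <= 1.
  by have := ler_wpM2l (ltW xp) h2; rewrite mulfV ?gt_eqF // mulrBr mulr1.
have : x * (1 + r * ln x) < x * expR (r * ln x) by rewrite ltr_pM2l.
have e : 1 + p * (x - 1) = x + r * (x - 1) + 0 by rewrite /r; ring.
rewrite e; apply: le_lt_trans.
have : 0 <= r * (x * ln x - (x - 1)) by apply: mulr_ge0; [exact: ltW | lra].
nra.
Qed.

Lemma bern (x p : R) : 0 <= x -> 1 < p -> 1 + p * (x - 1) <= powR x p.
Proof.
move=> x0 p1; have [->|x1] := eqVneq x 1; last by apply: ltW; apply: bern_strict.
by rewrite powR1 subrr mulr0 addr0.
Qed.

Lemma key_pt (x c p : R) : 0 <= x -> 0 < c -> 1 < p ->
  powR c p * (1 - p + p / c * x) <= powR x p /\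
  (x != c -> powR c p * (1 - p + p / c * x) < powR x p).
Proof.
move=> x0 c0 p1.
have e1 : powR x p = powR c p * powR (x / c) p.
  rewrite -powRM; [|exact: ltW|exact: divr_ge0 x0 (ltW c0)].
  by rewrite mulrC divfK // gt_eqF.
have e2 : 1 - p + p / c * x = 1 + p * (x / c - 1) by field; rewrite gt_eqF.
have cp : 0 < powR c p by apply: powR_gt0.
have xc0 : 0 <= x / c by rewrite divr_ge0 // ltW.
rewrite e1 e2; split.
  by rewrite ler_pM2l //; apply: bern.
move=> xc; rewrite ltr_pM2l //; apply: bern_strict => //.
by apply: contra xc => /eqP h; apply/eqP; move: h => /(congr1 (fun y => y * c)); rewrite mul1r divfK // gt_eqF.
Qed.

Lemma pm_lower (N : nat) (a : 'I_N -> R) (c p : R) : 0 < c -> 1 < p ->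
  (forall j, 0 <= a j) -> N%:R * c <= \sum_j a j ->
  N%:R * powR c p <= \sum_j powR c p * (1 - p + p / c * a j).
Proof.
move=> c0 p1 a0 hs.
rewrite -mulr_sumr big_split /= sumr_const card_ord -mulr_sumr mulrC.
rewrite ler_pM2l ?powR_gt0 //.
have pc : 0 <= p / c by rewrite divr_ge0 // ltW // (lt_trans ltr01).
have := ler_wpM2l pc hs.
have -> : p / c * (N%:R * c) = p * N%:R by field; rewrite gt_eqF.
rewrite -mulr_natr; lra.
Qed.

Lemma pm_ge (N : nat) (a : 'I_N -> R) (c p : R) : 0 < c -> 1 < p ->
  (forall j, 0 <= a j) -> N%:R * c <= \sum_j a j ->
  N%:R * powR c p <= \sum_j powR (a j) p.
Proof.
move=> c0 p1 a0 hs; apply: (le_trans (pm_lower c0 p1 a0 hs)).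
by apply: ler_sum => j _; case: (key_pt (a0 j) c0 p1).
Qed.

Lemma pm_eq (N : nat) (a : 'I_N -> R) (c p : R) : 0 < c -> 1 < p ->
  (forall j, 0 <= a j) -> N%:R * c <= \sum_j a j ->
  \sum_j powR (a j) p = N%:R * powR c p -> forall j, a j = c.
Proof.
move=> c0 p1 a0 hs heq k; apply/eqP; apply: contraT => hk.
have := pm_lower c0 p1 a0 hs; rewrite -heq.
rewrite (bigD1 k) //= [X in _ <= X](bigD1 k) //=.
have [_ hlt] := key_pt (a0 k) c0 p1.
have hle : \sum_(j | j != k) powR c p * (1 - p + p / c * a j) <= \sum_(j | j != k) powR (a j) p.
  by apply: ler_sum => j _; case: (key_pt (a0 j) c0 p1).
have := hlt hk; lra.
Qed.

End Pow.

Section Main.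
Variable R : realType.
Local Notation C := R[i].
Local Notation normc := Normc.normc.
Variables n N : nat.

Lemma numrad_Tj (F G : 'I_N -> 'cV[C]_n) j :
  numrad (adjmx (analysis_op G) *m delta_mx j j *m analysis_op F) = nr (F j) (G j).
Proof.
by rewrite /numrad /nr /unitS; congr sup; apply: eq_imagel => f _; rewrite Tj_mul innerZl.
Qed.

Lemma AE1p_nr (p : R) (F G : 'I_N -> 'cV[C]_n) :
  AE1p p F G = powR (N%:R^-1 * \sum_(j < N) powR (nr (F j) (G j)) p) p^-1.
Proof. by rewrite /AE1p; congr (powR (_ * _) _); apply: eq_bigr => j _; rewrite numrad_Tj. Qed.

Lemma normc_le_Re (z : C) : normc z <= complex.Re z -> z = (complex.Re z)%:C.
Proof.
case: z => u v /=; rewrite /Normc.normc => h.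
have s0 : 0 <= u ^+ 2 + v ^+ 2 by rewrite addr_ge0 ?sqr_ge0.
have u0 : 0 <= u := le_trans (sqrtr_ge0 _) h.
have h2 : Num.sqrt (u ^+ 2 + v ^+ 2) ^+ 2 <= u ^+ 2.
  by rewrite !expr2; apply: ler_pM => //; apply: sqrtr_ge0.
rewrite sqr_sqrtr // in h2.
have v0 : v = 0 by apply/eqP; rewrite -sqrf_eq0 eq_le sqr_ge0 andbT; lra.
by rewrite v0.
Qed.

Lemma Re_le_normc (z : C) : complex.Re z <= normc z.
Proof.
apply: (le_trans (ler_norm (complex.Re z))); rewrite -lecR -normCE; exact: normc_ge_Re.
Qed.

End Main.

Local Close Scope complex_scope.
Unset Implicit Arguments.

Theorem proposition4p1 (R : realType) (n N : nat)
    (F : 'I_N -> 'cV[R[i]]_n) (p : R) :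
  (0 < N)%N -> 1 < p -> uniform_parseval_frame F ->
  AE1p_opt p F = n%:R / N%:R /\ zeta1p p F = [set canonical_dual F].
Proof.
move=> N0 p1 hF.
have hF' := hF; case: hF' => hp hu.
have hd := parseval_dual hp.
have cdF := canonical_dual_self hd.
have hn := uniform_norm2 N0 hF.
have p0 : 0 < p := lt_trans ltr01 p1.
have Npos : (0 : R) < N%:R by rewrite ltr0n.
set c := n%:R / N%:R.
suff [hFc [hlow heq]] : AE1p p F F = c /\ (forall G, is_dual F G -> c <= AE1p p F G) /\
    (forall G, is_dual F G -> AE1p p F G = c -> G = F).
  have hopt : AE1p_opt p F = c.
    rewrite /AE1p_opt; apply/eqP; rewrite eq_le; apply/andP; split.
      apply: (@ge_inf R); last by exists F.
      by exists c => y [G hG <-]; exact: hlow.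
    by apply: lb_le_inf; [exists c, F | move=> y [G hG <-]; exact: hlow].
  split; first exact: hopt.
  apply/seteqP; split => G.
    move=> [hG hAE]; rewrite /set1 /mkset cdF; apply: heq; first exact: hG.
    by rewrite hAE.
  rewrite /set1 /mkset => ->; rewrite cdF; split; first exact: hd.
  by rewrite hFc hopt.
have [n0|npos] := eqVneq n 0%N.
  subst n.
  have c0 : c = 0 by rewrite /c mul0r.
  have AE0 G : AE1p p F G = 0.
    rewrite AE1p_nr.
    have nr0 (a b : 'cV[R[i]]_0) : nr a b = 0.
      rewrite /nr (_ : [set _ | _ in _] = set0) ?sup0 //.
      apply/seteqP; split => // y [f]; rewrite /unitS /= (flatmx0 f) /vnorm big_ord0 sqrtr0.
      by move=> /esym/eqP; rewrite oner_eq0.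
    rewrite (eq_bigr (fun _ => 0)); last by move=> j _; rewrite nr0 powR0 // gt_eqF.
    by rewrite big1 // mulr0 powR0 // invr_neq0 // gt_eqF.
  split; first by rewrite AE0.
  split; first by move=> G _; rewrite AE0 c0.
  by move=> G _ _; apply/funext => j; rewrite (flatmx0 (G j)) (flatmx0 (F j)).
have cpos : 0 < c by rewrite /c divr_gt0 // ltr0n lt0n.
have Nc : N%:R * c = n%:R by rewrite /c mulrC divfK // gt_eqF.
have Fj0 j : F j != 0.
  apply/negP => /eqP Fj; move: (hn j); rewrite Fj -/c => h.
  have : vnorm (0 : 'cV[R[i]]_n) = 0.
    by apply/eqP; rewrite -sqrf_eq0 vnorm2 big1 // => k _; rewrite mxE Normc.normc0 expr2 mulr0.
  by move=> h0; move: h; rewrite h0 expr2 mulr0 => h; move: cpos; rewrite -h ltxx.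
have cpK : powR (powR c p) p^-1 = c by rewrite -powRrM mulfV ?gt_eqF // powRr1 // ltW.
have Kp X : 0 <= X -> powR (powR X p^-1) p = X.
  by move=> X0; rewrite -powRrM mulVf ?gt_eqF // powRr1.
have lowfacts G : is_dual F G ->
    [/\ forall j, complex.Re (inner (G j) (F j)) <= nr (F j) (G j),
        forall j, 0 <= nr (F j) (G j),
        \sum_j complex.Re (inner (G j) (F j)) = n%:R &
        N%:R * c <= \sum_j nr (F j) (G j)].
  move=> hG.
  have h1 j : complex.Re (inner (G j) (F j)) <= nr (F j) (G j).
    exact: le_trans (Re_le_normc _) (nr_ge_inner _ (Fj0 j)).
  have h2 j : 0 <= nr (F j) (G j).
    exact: le_trans (normc_ge0 _) (nr_ge_inner _ (Fj0 j)).
  have h3 : \sum_j complex.Re (inner (G j) (F j)) = n%:R.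
    by rewrite -raddf_sum (dual_trace hG) -(rmorph_nat (real_complex R) n).
  split => //; rewrite Nc -h3; exact: ler_sum.
split.
  rewrite AE1p_nr (eq_bigr (fun _ => powR c p)); last by move=> j _; rewrite nr_self // hn.
  by rewrite sumr_const card_ord -[powR c p *+ N]mulr_natl mulrA mulVf ?gt_eqF // mul1r cpK.
split.
  move=> G hG; have [h1 h2 h3 h4] := lowfacts G hG.
  rewrite AE1p_nr -{1}cpK; apply: ge0_ler_powR.
  - by rewrite invr_ge0 ltW.
  - by rewrite nnegrE powR_ge0.
  - rewrite nnegrE; apply: mulr_ge0; first by rewrite invr_ge0 ltW.
    by apply: sumr_ge0 => j _; exact: powR_ge0.
  - rewrite -(ler_pM2l Npos) mulrA mulfV ?gt_eqF // mul1r; exact: pm_ge.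
move=> G hG hAE; have [h1 h2 h3 h4] := lowfacts G hG.
rewrite AE1p_nr in hAE.
set S := \sum_(j < N) powR (nr (F j) (G j)) p in hAE.
have X0 : 0 <= N%:R^-1 * S.
  apply: mulr_ge0; first by rewrite invr_ge0 ltW.
  by apply: sumr_ge0 => j _; exact: powR_ge0.
have hX : N%:R^-1 * S = powR c p by rewrite -(Kp _ X0) hAE.
have hS : S = N%:R * powR c p by rewrite -hX mulrA mulfV ?gt_eqF // mul1r.
have ha := pm_eq cpos p1 h2 h4 hS.
have hRe j : complex.Re (inner (G j) (F j)) = c.
  have hz : \sum_j (nr (F j) (G j) - complex.Re (inner (G j) (F j))) = 0.
    rewrite sumrB h3 (eq_bigr (fun _ => c)); last by move=> k _; rewrite ha.
    by rewrite sumr_const card_ord -[c *+ N]mulr_natl Nc subrr.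
  have nn : forall k : 'I_N, true -> 0 <= nr (F k) (G k) - complex.Re (inner (G k) (F k)).
    by move=> k _; rewrite subr_ge0.
  have := psumr_eq0P nn hz; move=> /(_ j) /(_ isT) /eqP; rewrite subr_eq0 => /eqP <-; exact: ha.
apply/funext => j; apply: nr_unique (Fj0 j) _ _.
  have hle : Normc.normc (inner (G j) (F j)) <= complex.Re (inner (G j) (F j)).
    by rewrite hRe -(ha j); apply: nr_ge_inner.
  by rewrite (normc_le_Re hle) hRe hn.
by rewrite ha hn.
Qed.
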